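(* There exist complex numbers $(a_n)_{n\ge0}$ with $\#\{n\colon a_n\neq 0\}=+\infty$ and $\varlimsup_{n\to+\infty}\sqrt[n]{|a_n|}=0$ (hence a random entire function $f(z,\omega)=\sum_{n\ge0}\xi_n(\omega)a_nz^n$ with independent standard complex gaussian $\xi_n$) and a set $E\subset(1;+\infty)$ of finite logarithmic measure such that for all $r\in(1;+\infty)\setminus E$, $$N(r)>\frac{\sqrt{s(r)}}{\ln^3 s(r)},$$ where $N(r)=\#\{n\colon \ln(|a_n|r^n)>0\}$ and $s(r)=2\sum_{n\colon \ln(|a_n|r^n)>0}\ln(|a_n|r^n)$.
   Context: A standard complex gaussian random variable has density $\frac1\pi e^{-|z|^2}$ on $\mathbb{C}$. A set $E\subset(1,+\infty)$ has finite logarithmic measure if $\int_E\frac{dr}{r}<+\infty$. *)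

(* Defs.v *)
From HB Require Import structures.
From mathcomp Require Import all_boot all_order all_algebra.
From mathcomp Require Import all_classical all_reals all_analysis.
From mathcomp Require Import complex.
Set Implicit Arguments. Unset Strict Implicit. Unset Printing Implicit Defensive.
Import Order.TTheory GRing.Theory Num.Theory.
Local Open Scope classical_set_scope.
Local Open Scope ring_scope.

Definition cmod (R : realType) (z : R[i]) : R := ComplexField.Normc.normc z.

Definition posset (R : realType) (a : nat -> R[i]) (r : R) : set nat :=
  [set n | 0 < ln (cmod (a n) * r ^+ n)].

(* N(r) = #{n : ln(|a_n| r^n) > 0}  (finite for the entire functions considered;
   computed as an extended-real sum and converted back to R). *)
Definition Ncount (R : realType) (a : nat -> R[i]) (r : R) : R :=
  fine (\esum_(n in posset a r) (1%E : \bar R)).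

Definition s_of_r (R : realType) (a : nat -> R[i]) (r : R) : R :=
  2 * fine (\esum_(n in posset a r) ((ln (cmod (a n) * r ^+ n))%:E)).

Definition finite_log_measure (R : realType) (E : set R) : Prop :=
  E `<=` `]1, +oo[ /\ measurable E /\
  (\int[@lebesgue_measure R]_(x in E) (x^-1)%:E < +oo)%E.

(* Main.v *)
Require Import Defs.
From HB Require Import structures.
From mathcomp Require Import all_boot all_order all_algebra.
From mathcomp Require Import all_classical all_reals all_analysis.
From mathcomp Require Import complex.
From mathcomp Require Import lra.
From mathcomp Require Import measurable_realfun lebesgue_measure ereal.
Import Order.TTheory GRing.Theory Num.Theory.
Import numFieldNormedType.Exports.
Local Open Scope classical_set_scope.
Local Open Scope ring_scope.
Local Open Scope complex_scope.

Section S.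
Variable R : realType.

Definition aa (n : nat) : R[i] := ((n%:R^-1) ^+ n : R)%:C.

Lemma cmodC (x : R) : 0 <= x -> cmod (x%:C) = x.
Proof.
move=> x0; rewrite /cmod /= expr0n /= addr0 sqrtr_sqr ger0_norm //.
Qed.

Lemma cmod_aa n : cmod (aa n) = (n%:R^-1) ^+ n.
Proof. by rewrite cmodC // exprn_ge0 // invr_ge0. Qed.

Lemma aa_neq0 n : aa n != 0.
Proof.
apply/negP => /eqP H.
move: H => /(congr1 (@complex.Re R)) /=.
move/eqP; rewrite expf_eq0 invr_eq0 pnatr_eq0.
by case: n => //=.
Qed.

Lemma term_eq n (r : R) : (0 < n)%N -> 0 < r ->
  ln (cmod (aa n) * r ^+ n) = ln (r / n%:R) *+ n.
Proof.
move=> n0 r0; rewrite cmod_aa -exprMn mulrC lnXn //.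
by rewrite divr_gt0 // ltr0n.
Qed.

Lemma term0 (r : R) : ln (cmod (aa 0) * r ^+ 0) = 0.
Proof. by rewrite cmod_aa !expr0 mulr1 ln1. Qed.


Lemma ln_gt0E (x : R) : (0 < ln x) = (1 < x).
Proof.
apply/idP/idP; last exact: ln_gt0.
by apply: contraLR; rewrite -!leNgt => /ln_le0.
Qed.

Definition KK (r : R) : nat := `|Num.ceil r|%N.

Lemma KK_spec (r : R) (n : nat) : 1 < r -> (n < KK r)%N = (n%:R < r).
Proof.
move=> r1.
have c0 : (0 <= Num.ceil r)%R by rewrite ceil_ge0 (lt_trans _ r1) // ltrN10.
rewrite /KK -ltz_nat gez0_abs // ceil_gt_int -pmulrn.
by [].
Qed.

Lemma posset_aa (r : R) : 1 < r ->
  posset aa r = [set` index_iota 1 (KK r)].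
Proof.
move=> r1; have r0 : 0 < r by rewrite (lt_trans _ r1).
rewrite /posset; apply/seteqP; split => n /=; rewrite mem_index_iota.
  case: n => [|n]; first by rewrite /posset /= term0 ltxx.
  rewrite term_eq // pmulrn_lgt0 // ln_gt0E ltr_pdivlMr ?ltr0n // mul1r.
  by rewrite KK_spec.
case/andP; case: n => [//|n] _; rewrite KK_spec // => nr.
by rewrite term_eq // pmulrn_lgt0 // ln_gt0E ltr_pdivlMr ?ltr0n // mul1r.
Qed.


Lemma Ncount_aa (r : R) : 1 < r -> Ncount aa r = (KK r - 1)%:R.
Proof.
move=> r1; rewrite /Ncount posset_aa // esum_fset ?finite_seq //.
rewrite -fsbig_seq ?iota_uniq //.
rewrite (@sumEFin _ _ _ _ (fun=> 1)) sumr_const_nat /=.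
by []. exact: finite_seq.
Qed.

Lemma s_aa (r : R) : 1 < r -> s_of_r aa r =
  2 * \sum_(1 <= i < KK r) ln (cmod (aa i) * r ^+ i).
Proof.
move=> r1; rewrite /s_of_r posset_aa // esum_fset ?finite_seq //; last first.
  move=> i; rewrite inE /= mem_index_iota => /andP[i1 iK].
  rewrite lee_fin; apply: ltW; move: (posset_aa r r1) => /seteqP[_ H].
  by apply: H; rewrite /= mem_index_iota i1 iK.
  exact: finite_seq.
by rewrite -fsbig_seq ?iota_uniq // sumEFin.
Qed.


Lemma term_le (r : R) i : 1 < r -> (0 < i)%N ->
  ln (cmod (aa i) * r ^+ i) <= r.
Proof.
move=> r1 i0; have r0 : 0 < r by rewrite (lt_trans _ r1).
rewrite term_eq //.
have i0' : 0 < i%:R :> R by rewrite ltr0n.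
have h : ln (r / i%:R) <= r / i%:R - 1.
  have := @le_ln1Dx R (r / i%:R - 1); rewrite [1 + _]addrC subrK; apply.
  by rewrite ltrBrDl subrr divr_gt0.
apply: (le_trans (ler_wMn2r i h)).
have e : (r / i%:R) *+ i = r by rewrite -mulr_natr mulfVK ?gt_eqF.
rewrite mulrnBl e.
by rewrite gerBl ler0n.
Qed.

Lemma main_ineq (r : R) : expR (expR 2) <= r ->
  Num.sqrt (s_of_r aa r) / (ln (s_of_r aa r)) ^+ 3 < Ncount aa r.
Proof.
move=> rc.
have r1 : 1 < r.
  apply: lt_le_trans rc; rewrite -expR0 ltr_expR expR_gt0 //.
have r0 : 0 < r by rewrite (lt_trans _ r1).
rewrite Ncount_aa // s_aa //.
set K := KK r.
have K2 : (2 <= K)%N by rewrite KK_spec.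
set N : R := (K - 1)%:R.
have N1 : 1 <= N by rewrite /N ler1n subn_gt0.
have rN : r <= N + 1.
  rewrite /N natrB ?(ltnW K2) // subrK.
  have c0 : (0 <= Num.ceil r)%R by rewrite ceil_ge0 (lt_trans _ r1) // ltrN10.
  have := ceil_ge r; rewrite -(gez0_abs c0) -pmulrn.
  by [].
set S := \sum_(1 <= i < K) _.
have SN : S <= N * r.
  rewrite /N mulrC mulr_natr -sumr_const_nat /S.
  by apply: ler_sum_nat => i /andP[i1 _]; apply: term_le.
have Sr : ln r <= S.
  rewrite /S big_ltn //; rewrite -{2}[r]expr1 term_eq // divr1 mulr1n lerDl.
  rewrite big_nat_cond sumr_ge0 // => i /andP[/andP[i1 iK] _].
  apply: ltW; move: (posset_aa r r1) => /seteqP[_ H].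
  by apply: H; rewrite /= mem_index_iota iK (ltn_trans _ i1).
have lr : expR 2 <= ln r by rewrite -ler_expR lnK // posrE.
have L2 : 2 <= ln (2 * S).
  have S0 : 0 < S by rewrite (lt_le_trans _ Sr) // (lt_le_trans _ lr) // expR_gt0.
  rewrite -ler_expR lnK; last by rewrite posrE mulr_gt0.
  apply: (le_trans lr); apply: (le_trans Sr).
  by rewrite ler_peMl ?ltW //; lra.
have L3 : 8 <= ln (2 * S) ^+ 3.
  by rewrite !exprS expr0 mulr1; nra.
have sq : Num.sqrt (2 * S) <= 2 * N.
  rewrite -(@ger0_norm _ (2 * N)) ?mulr_ge0 ?(le_trans _ N1) // -sqrtr_sqr.
  rewrite ler_sqrt ?sqr_ge0 //.
  have : 2 * S <= 2 * (N * (N + 1)).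
    rewrite ler_pM2l // (le_trans SN) // ler_pM2l ?(lt_le_trans _ N1) //.
  move=> h; apply: (le_trans h); nra.
rewrite ltr_pdivrMr; last by rewrite (lt_le_trans _ L3).
apply: (le_lt_trans sq).
have : 8 * N <= N * ln (2 * S) ^+ 3 by rewrite mulrC ler_pM2l // (lt_le_trans _ N1).
nra.
Qed.


Lemma limsup_aa :
  limn_esup (fun n => ((cmod (aa n)) `^ (n%:R)^-1)%:E) = 0%E.
Proof.
have h : (fun n => ((cmod (aa n)) `^ (n%:R)^-1)%:E) @ \oo --> 0%E.
  rewrite -cvg_shiftS.
  have -> : [sequence ((cmod (aa n.+1)) `^ (n.+1%:R)^-1)%:E]_n = EFin \o harmonic.
    apply/funext => n; rewrite /mk_sequence; cbv beta; rewrite cmod_aa /=; congr EFin.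
    rewrite -powR_mulrn ?invr_ge0 // -powRrM mulfV ?pnatr_eq0 // powRr1 // invr_ge0 //.
  exact: cvge_harmonic.
by rewrite (cvg_limn_einf_sup h).2.
Qed.

Definition EE : set R := `]1, expR (expR 2)[.

Lemma EE_flm : finite_log_measure EE.
Proof.
have mE : measurable EE by exact: measurable_itv.
split; first by move=> x; rewrite /EE /= !in_itv /= => /andP[-> _].
split => //.
have mf : measurable_fun EE (fun x : R => (x^-1)%:E).
  apply/measurable_EFinP; apply: open_continuous_measurable_fun; first exact: itv_open.
  move=> x; rewrite inE /EE /= in_itv /= => /andP[x1 _].
  by apply: inv_continuous; rewrite gt_eqF // (lt_trans _ x1).
have -> : (\int[@lebesgue_measure R]_(x in EE) (x^-1)%:E =
          \int[@lebesgue_measure R]_(x in EE) `|(x^-1)%:E|)%E.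
  apply: eq_integral => x; rewrite inE /EE /= in_itv /= => /andP[x1 _].
  by rewrite ger0_norm // invr_ge0 ltW // (lt_trans _ x1).
apply: (@le_lt_trans _ _ (1 * lebesgue_measure EE)%E).
  apply: integral_le_bound => //.
  apply: aeW => x; rewrite /EE /= in_itv /= => /andP[x1 _].
  have x0 : 0 < x by rewrite (lt_trans _ x1).
  rewrite /= lee_fin.
  rewrite ger0_norm; last by rewrite invr_ge0 ltW.
  by rewrite invf_le1 // ltW.
rewrite mul1e /EE lebesgue_measure_itv /=.
by case: ifP => _; rewrite ?ltry.
Qed.

End S.

Local Close Scope complex_scope.

Theorem lemma3p4 (R : realType) :
  exists (a : nat -> R[i]) (E : set R),
    ~ finite_set [set n | a n != 0] /\
    limn_esup (fun n => ((cmod (a n)) `^ (n%:R)^-1)%:E) = 0%E /\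
    finite_log_measure E /\
    forall r : R, 1 < r -> ~ E r ->
      Ncount a r > Num.sqrt (s_of_r a r) / (ln (s_of_r a r)) ^+ 3.
Proof.
exists (@aa R), (@EE R); split.
  have -> : [set n | aa R n != 0] = [set: nat].
    by apply/seteqP; split => n //= _; exact: aa_neq0.
  exact: infinite_nat.
split; first exact: limsup_aa.
split; first exact: EE_flm.
move=> r r1 nE; apply: main_ineq.
rewrite leNgt; apply/negP => rc; apply: nE.
by rewrite /EE /= in_itv /= r1 rc.
Qed.
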